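(* Let $G$ be a paratopological group with binary operation $\star$, let $\kappa$ be a regular uncountable cardinal, and let $T\subset G$ be a subspace of $G$ which is a stationary subset of $\kappa$ (that is, $T$ is identified with a stationary subset of $\kappa$, and the topology $T$ inherits from $G$ is the order topology of $T$ as a subspace of $\kappa$). Then one can choose a subset $S\subset T$ that is closed in $T$ and unbounded in $\kappa$, an ordinal $\lambda\in T$, and a set $L\subset [0,\lambda]_T=\{t\in T: t\le\lambda\}$ such that: (1) $\lambda\in L$; (2) $\lambda$ is a limit point of $L$; (3) the map $L\times S\to G$, $(x,y)\mapsto x\star y$, is injective.
   Context: All spaces are Tychonoff. A paratopological group is a group endowed with a topology for which the group multiplication $G\times G\to G$ is (jointly) continuous. Ordinals and their subsets carry the order topology and the subspace topology respectively. A subset of a regular uncountable cardinal $\kappa$ is stationary if it meets every closed unbounded subset of $\kappa$. *)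

(* Defs.v *)
From HB Require Import structures.
From mathcomp Require Import all_boot all_order all_algebra.
From mathcomp Require Import all_classical all_reals all_analysis.
Set Implicit Arguments. Unset Strict Implicit. Unset Printing Implicit Defensive.
Import Order.TTheory.
Local Open Scope classical_set_scope.
Local Open Scope order_scope.

(* kappa is represented by a totally ordered type K (its elements are the
   ordinals < kappa).  The conditions below characterize K, up to order
   isomorphism, as a regular uncountable cardinal:
   - the order is a well-order;
   - K is an initial ordinal: every proper initial segment [0,x) has
     strictly smaller cardinality than K;
   - regularity (cf kappa = kappa): every unbounded subset has cardinality
     of K;
   - uncountability. *)

Definition unbounded {d} {K : orderType d} (A : set K) :=
  forall a : K, exists x, A x /\ a <= x.

Definition regular_uncountable_cardinal {d} (K : orderType d) : Prop :=
  [/\ well_founded (fun x y : K => x < y),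
      (forall x : K, ~ ([set: K] #<= [set y | y < x])%card),
      (forall A : set K, unbounded A -> ([set: K] #<= A)%card) &
      ~ ([set: K] #<= [set: nat])%card].

(* lower bound None = -infinity, upper bound None = +infinity *)
Definition above_lo {d} {K : orderType d} (a : option K) (x : K) :=
  match a with None => true | Some a => a < x end.
Definition below_hi {d} {K : orderType d} (b : option K) (x : K) :=
  match b with None => true | Some b => x < b end.

Definition ointerval {d} {K : orderType d} (a b : option K) : set K :=
  [set x | above_lo a x /\ below_hi b x].

Definition ord_open {d} {K : orderType d} (U : set K) :=
  forall x, U x -> exists a b, ointerval a b x /\ ointerval a b `<=` U.

Definition ord_closed {d} {K : orderType d} (C : set K) := ord_open (~` C).

Definition sub_open {d} {K : orderType d} (T W : set K) :=
  exists U, ord_open U /\ W = U `&` T.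

Definition sub_closed {d} {K : orderType d} (T S : set K) :=
  S `<=` T /\ sub_open T (T `\` S).

Definition sub_limit_point {d} {K : orderType d} (T L : set K) (lam : K) :=
  forall U, sub_open T U -> U lam -> exists x, L x /\ x <> lam /\ U x.

Definition stationary {d} {K : orderType d} (T : set K) :=
  forall C : set K, ord_closed C -> unbounded C -> exists x, C x /\ T x.

Definition is_group {G : Type} (mul : G -> G -> G) (one : G) (inv : G -> G) :=
  [/\ forall x y z, mul x (mul y z) = mul (mul x y) z,
      forall x, mul one x = x, forall x, mul x one = x,
      forall x, mul (inv x) x = one & forall x, mul x (inv x) = one].

Definition paratopological_group {G : topologicalType}
  (mul : G -> G -> G) (one : G) (inv : G -> G) :=
  is_group mul one inv /\ continuous (fun p : G * G => mul p.1 p.2).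

Definition tychonoff_space (G : topologicalType) :=
  accessible_space G /\ completely_regular_space G.

(* e identifies the subset T of K with a subspace of G: e is injective on T
   and the topology that e(T) inherits from G corresponds to the subspace
   (order) topology of T in K. *)
Definition subspace_embedding {d} {K : orderType d} {G : topologicalType}
  (T : set K) (e : K -> G) :=
  (forall x y, T x -> T y -> e x = e y -> x = y) /\
  (forall W, W `<=` T -> (sub_open T W <-> exists O : set G, open O /\ e @` W = O `&` e @` T)).

(* Main.v *)
Require Import Defs.
From HB Require Import structures.
From mathcomp Require Import all_boot all_order all_algebra.
From mathcomp Require Import all_classical all_reals all_analysis.
Import Order.TTheory.
Local Open Scope classical_set_scope.
Local Open Scope order_scope.

Lemma rk_min d (K : orderType d) : well_founded (fun x y : K => x < y) ->
  forall P : K -> Prop, (exists x, P x) -> exists x, P x /\ forall y, P y -> x <= y.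
Proof.
move=> wf P [x0 Px0].
apply: contrapT => Hno.
have H : forall x, ~ P x.
  move=> x; elim/(well_founded_ind wf): x => x IH Px.
  apply: Hno; exists x; split => // y Py.
  rewrite leNgt; apply/negP => yx; exact: (IH y yx Py).
exact: (H x0 Px0).
Qed.

Lemma rk_bounded d (K : orderType d) (A : set K) :
  ~ ([set: K] #<= A)%card -> regular_uncountable_cardinal K -> exists c, forall y, A y -> y < c.
Proof.
move=> nb [_ _ reg _]; apply: contrapT => Hn; apply: nb; apply: reg => a.
apply: contrapT => H2; apply: Hn; exists a => y Ay.
rewrite ltNge; apply/negP => ay; apply: H2; by exists y.
Qed.

Lemma rk_nomax d (K : orderType d) : regular_uncountable_cardinal K ->
  forall x : K, exists y, x < y.
Proof.
move=> [wf init reg unc] x; apply: contrapT => H.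
have hu : unbounded [set x].
  move=> a; exists x; split => //; rewrite leNgt; apply/negP => xa; apply: H; by exists a.
have := reg _ hu => h1; apply: unc.
apply: (card_le_trans h1).
apply: (@card_le_trans _ _ _ ((fun _ : nat => x) @` [set: nat])).
  by apply: subset_card_le => y ->; exists 0%N.
exact: card_image_le.
Qed.

Lemma rk_small d (K : orderType d) (A : set K) (b : K) : regular_uncountable_cardinal K ->
  (A #<= [set y | y < b])%card -> exists c, forall y, A y -> y < c.
Proof.
move=> hK hA; apply: rk_bounded => // h; case: hK => _ init _ _.
exact: (init b (card_le_trans h hA)).
Qed.

Lemma rk_union d (K : orderType d) (I : set K) (b : K) (A : K -> set K) :
  regular_uncountable_cardinal K ->
  (forall i, I i -> i < b) ->
  (forall i, I i -> exists c, forall y, A i y -> y < c) ->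
  exists c, forall i y, I i -> A i y -> y < c.
Proof.
move=> hK Ib hA.
have : forall i, exists c, I i -> forall y, A i y -> y < c.
  move=> i; case: (pselect (I i)) => Ii.
    by case: (hA i Ii) => c hc; exists c.
  by exists b.
case/choice => f hf.
have : (f @` I #<= [set y | y < b])%card.
  apply: (card_le_trans (card_image_le f I)); exact: subset_card_le.
case/(@rk_small _ _ _ b hK) => c hc; exists c => i y Ii Ay.
apply: (lt_trans (hf i Ii y Ay)); apply: hc; by exists i.
Qed.

Lemma rk_sup d (K : orderType d) (u : nat -> K) : regular_uncountable_cardinal K ->
  exists s, (forall n, u n <= s) /\ (forall a, a < s -> exists n, a < u n).
Proof.
move=> hK.
have : exists c, forall y, range u y -> y < c.
  apply: rk_bounded => // h; case: hK => _ _ _ unc; apply: unc.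
  apply: (card_le_trans h); exact: card_image_le.
case=> c hc.
case: hK => wf _ _ _.
have [s [hs smin]] := @rk_min _ _ wf (fun s => forall n, u n <= s) (ex_intro _ c (fun n => ltW (hc _ (ex_intro2 _ _ n I erefl)))).
exists s; split => // a As; apply: contrapT => H.
have : s <= a.
  apply: smin => n; rewrite leNgt; apply/negP => an; apply: H; by exists n.
by rewrite leNgt As.
Qed.
Lemma rk_club_h d (K : orderType d) (h : K -> K) : regular_uncountable_cardinal K ->
  ord_closed [set b | forall a, a < b -> h a <= b] /\
  unbounded [set b | forall a, a < b -> h a <= b].
Proof.
move=> hK; split.
  move=> x /= Hx.
  have [a [ax hax]] : exists a, a < x /\ x < h a.
    apply: contrapT => H; apply: Hx => a ax; rewrite leNgt; apply/negP => xh; apply: H; by exists a.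
  exists (Some a), (Some (h a)); split => //= z [az zh] Hz; rewrite /= in az zh.
  by move: (Hz a az); rewrite leNgt zh.
have step : forall b, exists c, b <= c /\ forall a, a < b -> h a < c.
  move=> b.
  have [c hc] := @rk_union _ _ [set a | a < b] b (fun a => [set h a]) hK (fun i hi => hi)
    (fun i _ => let: ex_intro c hc := @rk_nomax _ _ hK (h i) in ex_intro _ c (fun y yh => eq_ind_r (fun z => z < c) hc yh)).
  exists (Order.max b c); split; first by rewrite le_max lexx.
  move=> a ab; rewrite lt_max; apply/orP; right; exact: hc ab erefl.
case/choice: step => g hg.
move=> a0.
pose u := fun n => iter n g a0.
have [s [us sl]] := @rk_sup _ _ u hK.
exists s; split; last exact: (us 0%N).
move=> a /sl [n an].
apply: ltW; apply: (lt_le_trans _ (us n.+1)).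
exact: (hg (u n)).2 a an.
Qed.

Lemma rk_ge d (K : orderType d) (C : set K) (a : K) :
  ord_closed C -> unbounded C ->
  ord_closed (C `&` [set x | a <= x]) /\ unbounded (C `&` [set x | a <= x]).
Proof.
move=> cC uC; split.
  move=> x /= Hx.
  case: (pselect (C x)) => Cx.
    have xa : x < a by rewrite ltNge; apply/negP => ax; apply: Hx.
    exists None, (Some a); split => //= z [_ za] [_ az]; rewrite /= in za; by move: za; rewrite ltNge az.
  have [a' [b' [hx hs]]] := cC x Cx.
  exists a', b'; split => // z hz [Cz _]; exact: (hs z hz Cz).
move=> b; have [x [Cx hx]] := uC (Order.max a b).
exists x; split; last by move: hx; rewrite ge_max => /andP[].
by split => //; move: hx; rewrite ge_max => /andP[].
Qed.
Lemma rk_setT_club d (K : orderType d) : ord_closed [set: K] /\ unbounded [set: K].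
Proof. split; first by move=> x /= []. by move=> a; exists a. Qed.

Lemma rk_stat_unb d (K : orderType d) (T C : set K) : stationary T ->
  ord_closed C -> unbounded C -> unbounded (C `&` T).
Proof.
move=> sT cC uC a.
have [c1 u1] := @rk_ge _ _ _ a cC uC.
have [x [[Cx ax] Tx]] := sT _ c1 u1.
by exists x.
Qed.

Lemma rk_acc d (K : orderType d) (T : set K) : regular_uncountable_cardinal K ->
  stationary T ->
  ord_closed [set b | forall a, a < b -> exists x, T x /\ a < x /\ x < b] /\
  unbounded [set b | forall a, a < b -> exists x, T x /\ a < x /\ x < b].
Proof.
move=> hK sT.
have [cT uT] := @rk_setT_club _ K.
have uTT := @rk_stat_unb _ _ _ _ sT cT uT.
have wf : well_founded (fun x y : K => x < y) by case: hK.
split.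
  move=> b /= Hb.
  have [a [ab ha]] : exists a, a < b /\ ~ exists x, T x /\ a < x /\ x < b.
    apply: contrapT => H; apply: Hb => a ab; apply: contrapT => H2; apply: H; by exists a.
  have [sb [bsb sbmin]] := @rk_min _ _ wf (fun z => b < z) (@rk_nomax _ _ hK b).
  exists (Some a), (Some sb); split => //= z [az zsb] Hz; rewrite /= in az zsb.
  have zb : z <= b by rewrite leNgt; apply/negP => bz; move: (sbmin z bz); rewrite leNgt zsb.
  move: zb; rewrite le_eqVlt => /orP[/eqP zb|zb].
    by subst z; apply: Hb.
  have [x [Tx [ax xz]]] := Hz a az; apply: ha; exists x; do !split => //; exact: lt_trans xz zb.
have step : forall b, exists c, T c /\ b < c.
  move=> b; have [nb bnb] := @rk_nomax _ _ hK b.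
  have [c [[_ Tc] hc]] := uTT nb; exists c; split => //; exact: lt_le_trans bnb hc.
case/choice: step => g hg.
move=> a0; pose u := fun n => iter n g a0.
have [s [us sl]] := @rk_sup _ _ u hK.
exists s; split; last exact: (us 0%N).
move=> a /sl [n an]; exists (u n.+1); split; first exact: (hg (u n)).1.
split; first exact: lt_trans an (hg (u n)).2.
exact: lt_le_trans (hg (u n.+1)).2 (us n.+2).
Qed.
Theorem lemma2p2 (G : topologicalType) (mul : G -> G -> G) (one : G) (inv : G -> G)
  (d : Order.disp_t) (K : orderType d) (T : set K) (e : K -> G) :
  tychonoff_space G ->
  paratopological_group mul one inv ->
  regular_uncountable_cardinal K ->
  subspace_embedding T e ->
  stationary T ->
  exists (S : set K) (lam : K) (L : set K),
    sub_closed T S /\ unbounded S /\ T lam /\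
    L `<=` [set t | T t /\ t <= lam] /\
    L lam /\ sub_limit_point T L lam /\
        forall x1 y1 x2 y2, L x1 -> S y1 -> L x2 -> S y2 ->
          mul (e x1) (e y1) = mul (e x2) (e y2) -> x1 = x2 /\ y1 = y2.
Proof.
move=> _ [[assoc o_l o_r inv_l inv_r] _] hK [einj _] sT.
have lc : forall a b c, mul a b = mul a c -> b = c.
  move=> a b c E; by rewrite -(o_l b) -(o_l c) -(inv_l a) -!assoc E.
have rc : forall a b c, mul b a = mul c a -> b = c.
  move=> a b c E; by rewrite -(o_r b) -(o_r c) -(inv_r a) !assoc E.
have [cT uT] := @rk_setT_club _ K.
have [t0 [_ Tt0]] := sT _ cT uT.
have [nb t0nb] := @rk_nomax _ _ hK t0.
have [cA uA] := @rk_acc _ _ T hK sT.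
have [cA' uA'] := @rk_ge _ _ _ nb cA uA.
have [lam [[Alam nblam] Tlam]] := sT _ cA' uA'.
pose L := [set t | T t /\ t <= lam].
have [lb lamlb] := @rk_nomax _ _ hK lam.
have Llb : forall x, L x -> x < lb by move=> x [_ xl]; exact: le_lt_trans xl lamlb.
have hY : forall al, exists c, forall y,
    (exists x1 x2 y', L x1 /\ L x2 /\ y' <= al /\ T y /\ mul (e x1) (e y) = mul (e x2) (e y')) ->
    y < c.
  move=> al.
  have [ab alab] := @rk_nomax _ _ hK al.
  have hZ : forall x1 x2 y', exists c, forall y, T y /\ mul (e x1) (e y) = mul (e x2) (e y') -> y < c.
    move=> x1 x2 y'.
    case: (pselect (exists y0, T y0 /\ mul (e x1) (e y0) = mul (e x2) (e y'))).
      case=> y0 [Ty0 E0]; have [c y0c] := @rk_nomax _ _ hK y0.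
      exists c => y [Ty E]; have : y = y0.
        apply: einj => //; apply: (lc (e x1)); by rewrite E E0.
      by move=> ->.
    move=> H; exists al => y Hy; exfalso; apply: H; by exists y.
  have h3 : forall x1 x2, exists c, forall y' y, y' <= al ->
      T y /\ mul (e x1) (e y) = mul (e x2) (e y') -> y < c.
    move=> x1 x2.
    apply: (@rk_union _ _ [set y' | y' <= al] ab (fun y' => [set y | T y /\ mul (e x1) (e y) = mul (e x2) (e y')]) hK).
      move=> i /= il; exact: le_lt_trans il alab.
    move=> i _; exact: hZ.
  have h2 : forall x1, exists c, forall x2 y, L x2 ->
      (exists y', y' <= al /\ T y /\ mul (e x1) (e y) = mul (e x2) (e y')) -> y < c.
    move=> x1.
    apply: (@rk_union _ _ L lb (fun x2 => [set y | exists y', y' <= al /\ T y /\ mul (e x1) (e y) = mul (e x2) (e y')]) hK Llb).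
    move=> i _; have [c hc] := h3 x1 i; exists c => y [y' [y'al Z]]; exact: hc y'al Z.
  have [c hc] := (@rk_union _ _ L lb (fun x1 => [set y | exists x2 y', L x2 /\ y' <= al /\ T y /\ mul (e x1) (e y) = mul (e x2) (e y')]) hK Llb
    (fun i _ => let: ex_intro c hc := h2 i in ex_intro _ c (fun y '(ex_intro x2 (ex_intro y' (conj Lx2 Z))) => hc x2 y Lx2 (ex_intro _ y' Z)))).
  exists c => y [x1 [x2 [y' [Lx1 Z]]]]; apply: (hc x1 y Lx1); by exists x2, y'.
case/choice: hY => h hh.
have [cC uC] := @rk_club_h _ _ h hK.
set C := [set b | forall a, a < b -> h a <= b] in cC uC.
exists (C `&` T), lam, L.
split.
  split; first by move=> x [].
  exists (setC C); split; first exact: cC.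
  apply/seteqP; split => x /=.
    by move=> [Tx H]; split => // Cx; apply: H.
  by move=> [nC Tx]; split => // -[].
split; first exact: (@rk_stat_unb _ _ _ _ sT cC uC).
split => //.
split; first by move=> x.
split; first by split.
split.
  move=> U [U' [oU' ->]] [U'l Tl].
  have [a [b [[al lb'] sub]]] := oU' lam U'l.
  have [x [Tx [ax xl]]] : exists x, T x /\ above_lo a x /\ x < lam.
    case: a al sub => [a|] /= al _.
      have [x [Tx [ax xl]]] := Alam a al; by exists x.
    by exists t0; do !split => //; exact: lt_le_trans t0nb nblam.
  exists x; split; first by split => //; exact: ltW.
  split; first by move=> E; rewrite E ltxx in xl.
  split => //; apply: sub; split => //.
  by case: b lb' => [b|] //= lb'; exact: lt_trans xl lb'.
move=> x1 y1 x2 y2 Lx1 [Cy1 Ty1] Lx2 [Cy2 Ty2] E.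
have Tx1 := Lx1.1; have Tx2 := Lx2.1.
case: (ltgtP y1 y2) => y12.
- have H := hh y1 y2 (ex_intro _ x2 (ex_intro _ x1 (ex_intro _ y1 (conj Lx2 (conj Lx1 (conj (lexx y1) (conj Ty2 (esym E)))))))).
  by move: (Cy2 y1 y12); rewrite leNgt H.
- have H := hh y2 y1 (ex_intro _ x1 (ex_intro _ x2 (ex_intro _ y2 (conj Lx1 (conj Lx2 (conj (lexx y2) (conj Ty1 E))))))).
  by move: (Cy1 y2 y12); rewrite leNgt H.
- subst y2; split => //; apply: einj => //; exact: rc E.
Qed.
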